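(* Let $d\ge1$, $s_1\ge0$, $s_2\le0$, $\alpha>0$ and $g\in L^2(\mathbb{T}^d;\mathbb{C})$. For $\beta>0$ let $(u_\beta,v_\beta)$ be the unique minimizer over $H^{s_1}_0(\mathbb{T}^d;\mathbb{C})\times(\dot H^{s_2}(\mathbb{T}^d;\mathbb{C})\cap L^2_0(\mathbb{T}^d;\mathbb{C}))$ of $$I_\beta(u,v)=\frac12\|(-\Delta)^{s_1/2}u\|^2+\frac\alpha2\|u+v-g\|^2+\frac\beta2\|R_{s_2/2}(v)\|^2.$$ Let $(\beta_n)$ be an increasing positive sequence with $\beta_n\to\infty$. Then the sequence $(u_{\beta_n},v_{\beta_n})$ is bounded, and a subsequence converges weakly to $(u_0,0)$, where $u_0$ is a minimizer over $H^{s_1}_0(\mathbb{T}^d;\mathbb{C})$ of $$E(u)=\frac12\|(-\Delta)^{s_1/2}u\|^2+\frac\alpha2\|u-g\|^2.$$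
   Context: $\mathbb{T}^d=\mathbb{R}^d/(2\pi\mathbb{Z})^d$, $\|\cdot\|$ is the $L^2(\mathbb{T}^d;\mathbb{C})$ norm, $L^2_0$ the zero-mean subspace, $\hat u_k=\int_{\mathbb{T}^d}u\,e^{-ik\cdot x}dx$. $(-\Delta)^\sigma u=(2\pi)^{-d}\sum_k|k|^{2\sigma}\hat u_ke^{ik\cdot x}$; for $\sigma\le0$, $R_\sigma(u)=(2\pi)^{-d}\sum_{k\ne0}|k|^{2\sigma}\hat u_ke^{ik\cdot x}$. For $\sigma\ge0$, $H^\sigma_0=\{u\in L^2_0:\sum_{k\ne0}|k|^{2\sigma}|\hat u_k|^2<\infty\}$; for $\sigma<0$, $\dot H^\sigma$ is the completion of $L^2_0$ w.r.t. $(\sum_{k\ne0}|k|^{2\sigma}|\hat u_k|^2)^{1/2}$. Weak convergence is in $H^{s_1}_0$ for the first component and in $\dot H^{s_2}\cap L^2_0$ (weakly in $L^2$) for the second. *)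

(* Defs.v *)
(* Periodic functions on T^d are represented by
   their Fourier coefficient families  k |-> \hat u_k,  k in Z^d. *)
From HB Require Import structures.
From mathcomp Require Import all_boot all_order all_algebra.
From mathcomp Require Import all_classical all_reals all_analysis.
From mathcomp Require Import complex.
Set Implicit Arguments. Unset Strict Implicit. Unset Printing Implicit Defensive.
Import Order.TTheory GRing.Theory Num.Theory.
Local Open Scope ring_scope.
Local Open Scope classical_set_scope.
Import numFieldNormedType.Exports.

Section TorusDefs.
Variable R : realType.
Variable d : nat.

Definition freq := 'rV[int]_d.

Definition fsq (k : freq) : R := \sum_(i < d) ((k ord0 i)%:~R) ^+ 2.

Definition coef := freq -> R[i].

Definition cabs2 (z : R[i]) : R := complex.Re z ^+ 2 + complex.Im z ^+ 2.

Definition torus_c : R := ((2 * pi) ^+ d)^-1.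

(* ||u||^2 = (2pi)^{-d} sum_k |\hat u_k|^2  (Parseval) *)
Definition sqnormL2 (u : coef) : \bar R :=
  (torus_c%:E * \esum_(k in [set: freq]) (cabs2 (u k))%:E)%E.

Definition in_L2 (u : coef) : Prop := (sqnormL2 u < +oo)%E.

Definition mean_zero (u : coef) : Prop := u 0 = 0.

Definition sobsq (sigma : R) (u : coef) : \bar R :=
  \esum_(k in [set k : freq | k != 0]) ((fsq k `^ sigma) * cabs2 (u k))%:E.

Definition H0 (sigma : R) (u : coef) : Prop :=
  [/\ in_L2 u, mean_zero u & (sobsq sigma u < +oo)%E].

Definition Hdot_L20 (sigma : R) (v : coef) : Prop :=
  [/\ in_L2 v, mean_zero v & (sobsq sigma v < +oo)%E].

Definition fraclap (sigma : R) (u : coef) : coef :=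
  fun k => ((fsq k `^ sigma)%:C)%C * u k.

Definition Rop (sigma : R) (v : coef) : coef :=
  fun k => if k == 0 then 0 else ((fsq k `^ sigma)%:C)%C * v k.

Definition Ibeta (s1 s2 alpha beta : R) (g u v : coef) : \bar R :=
  ((2^-1)%:E * sqnormL2 (fraclap (s1 / 2) u)
   + (alpha / 2)%:E * sqnormL2 (fun k => (u k + v k - g k)%R)
   + (beta / 2)%:E * sqnormL2 (Rop (s2 / 2) v))%E.

Definition Efun (s1 alpha : R) (g u : coef) : \bar R :=
  ((2^-1)%:E * sqnormL2 (fraclap (s1 / 2) u)
   + (alpha / 2)%:E * sqnormL2 (fun k => (u k - g k)%R))%E.

Definition minimizes_I (s1 s2 alpha beta : R) (g u v : coef) : Prop :=
  [/\ H0 s1 u, Hdot_L20 s2 v &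
    forall u' v', H0 s1 u' -> Hdot_L20 s2 v' ->
      (Ibeta s1 s2 alpha beta g u v <= Ibeta s1 s2 alpha beta g u' v')%E].

Definition minimizes_E (s1 alpha : R) (g u : coef) : Prop :=
  H0 s1 u /\
  forall u', H0 s1 u' -> (Efun s1 alpha g u <= Efun s1 alpha g u')%E.

Definition rsum (f : freq -> R) : R :=
  fine (\esum_(k in [set: freq]) (Num.max (f k) 0)%:E)
  - fine (\esum_(k in [set: freq]) (Num.max (- f k) 0)%:E).

Definition csum (w : freq -> R[i]) : R[i] :=
  (rsum (fun k => complex.Re (w k)) +i* rsum (fun k => complex.Im (w k)))%C.

Definition innerL2 (u w : coef) : R[i] :=
  (torus_c%:C)%C * csum (fun k => u k * (w k)^*%C).

Definition innerH (sigma : R) (u w : coef) : R[i] :=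
  csum (fun k => if k == 0 then 0 else ((fsq k `^ sigma)%:C)%C * (u k * (w k)^*%C)).

Definition ccvg (z : nat -> R[i]) (l : R[i]) : Prop :=
  (fun n => complex.Re (z n)) @ \oo --> complex.Re l /\
  (fun n => complex.Im (z n)) @ \oo --> complex.Im l.

Definition weak_H0 (sigma : R) (u : nat -> coef) (l : coef) : Prop :=
  forall w, H0 sigma w -> ccvg (fun n => innerH sigma (u n) w) (innerH sigma l w).

Definition weak_L20 (v : nat -> coef) (l : coef) : Prop :=
  forall w, in_L2 w -> mean_zero w -> ccvg (fun n => innerL2 (v n) w) (innerL2 l w).

End TorusDefs.

(* Main.v *)
Require Import Defs.
From HB Require Import structures.
From mathcomp Require Import all_boot all_order all_algebra.
From mathcomp Require Import all_classical all_reals all_analysis.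
From mathcomp Require Import complex.
From mathcomp Require Import ring lra finmap zify.
Import Order.TTheory GRing.Theory Num.Theory.
Local Open Scope ring_scope.
Local Open Scope classical_set_scope.
Import numFieldNormedType.Exports.


Section Gen.
Variable R : realType.
Variable T : choiceType.
Local Open Scope ereal_scope.

Lemma esumZ (I : set T) (f : T -> R) (x : R) : (0 <= x)%R ->
  (forall i, I i -> 0 <= f i)%R ->
  \esum_(i in I) (x * f i)%:E = x%:E * \esum_(i in I) (f i)%:E.
Proof.
move=> x0 f0; rewrite /esum -ereal_supZl//; last first.
  by apply/set0P; exists 0; exists set0; [exact: fsets_set0|rewrite fsbig_set0].
have H (A : set T) : fsets I A -> \sum_(i \in A) (x * f i)%:E = x%:E * \sum_(i \in A) (f i)%:E.
  move=> [finA AI]; rewrite !fsbig_finite// big_seq [in RHS]big_seq ge0_sume_distrr//.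
  move=> i hi; have : i \in fset_set A by [].
  by rewrite in_fset_set// => /set_mem /AI /f0; rewrite lee_fin.
congr ereal_sup; apply/seteqP; split => y.
  by move=> [A hA <-]; exists (\sum_(i \in A) (f i)%:E); [exists A|rewrite H].
by move=> [z [A hA <-] <-]; exists A => //; rewrite H.
Qed.

Lemma cvg_seqsum (s : seq T) (a : nat -> T -> R) (b : T -> R) :
  (forall k, a ^~ k @ \oo --> b k) ->
  (fun n => \sum_(i <- s) a n i)%R @ \oo --> (\sum_(i <- s) b i)%R.
Proof.
move=> ab; elim: s => [|x s IH].
  under eq_fun do rewrite big_nil; rewrite big_nil; exact: cvg_cst.
under eq_fun do rewrite big_cons; rewrite big_cons; exact: cvgD.
Qed.

Lemma mc_inc (h : T -> R) (t : nat -> T -> R) (tl : T -> R) :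
  (forall k, 0 <= h k)%R -> (forall n k, 0 <= t n k)%R ->
  (forall n k, t n k <= t n.+1 k)%R -> (forall k, t ^~ k @ \oo --> tl k) ->
  \esum_(k in [set: T]) (tl k * h k)%:E < +oo ->
  (fun n => fine (\esum_(k in [set: T]) (t n k * h k)%:E)) @ \oo -->
    fine (\esum_(k in [set: T]) (tl k * h k)%:E).
Proof.
move=> h0 t0 tinc tcv Efin.
have tnd k : nondecreasing_seq (t ^~ k) by apply/nondecreasing_seqP => n; exact: tinc.
have tle n k : (t n k <= tl k)%R.
  apply: (cvgr_to_ge (tcv k)); exists n => // m /= nm; exact: tnd.
set E := fun n => \esum_(k in [set: T]) (t n k * h k)%:E.
set El := \esum_(k in [set: T]) (tl k * h k)%:E.
have E0 n : 0 <= E n by apply: esum_ge0 => k _; rewrite lee_fin mulr_ge0.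
have El0 : 0 <= El by apply: esum_ge0 => k _; rewrite lee_fin mulr_ge0// (le_trans (t0 0%N k)).
have ElE n : E n <= El by apply: le_esum => k _; rewrite lee_fin ler_wpM2r.
have Efn n : E n = (fine (E n))%:E.
  by rewrite fineK// ge0_fin_numE// (le_lt_trans (ElE n) Efin).
have ElE' : El = (fine El)%:E by rewrite fineK// ge0_fin_numE.
rewrite -/El.
set e := fun n => fine (E n).
have end_ : nondecreasing_seq e.
  apply/nondecreasing_seqP => n; rewrite -lee_fin /e -!Efn.
  by apply: le_esum => k _; rewrite lee_fin ler_wpM2r.
have eb n : (e n <= fine El)%R by rewrite -lee_fin /e -Efn -ElE'.
have ce : e @ \oo --> sup (range e).
  by apply: nondecreasing_cvgn => //; exists (fine El) => _ [n _ <-].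
suff <- : sup (range e) = fine El by [].
apply/le_anti/andP; split.
  by apply: (cvgr_to_le ce); apply: nearW.
rewrite -lee_fin -ElE' /El /esum; apply: ge_ereal_sup => _ [X [finX _] <-].
rewrite fsumEFin // lee_fin fsbig_finite //.
apply: (cvgr_to_le (cvg_seqsum (fset_set X) (fun n k => t n k * h k)%R (fun k => tl k * h k)%R (fun k => cvgMr_tmp (tcv k)))).
apply: nearW => n.
have : (e n <= sup (range e))%R.
  apply: (cvgr_to_ge ce); exists n => // m /= nm; exact: end_.
apply: le_trans; rewrite -lee_fin /e -Efn -sumEFin -fsbig_finite//.
by apply: ereal_sup_ubound; exists X.
Qed.

Lemma fin_esum_le (h p q : T -> R) : (forall k, 0 <= h k)%R -> (forall k, 0 <= p k)%R ->
  (forall k, p k <= q k)%R ->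
  \esum_(k in [set: T]) (q k * h k)%:E < +oo ->
  \esum_(k in [set: T]) (p k * h k)%:E = (fine (\esum_(k in [set: T]) (p k * h k)%:E))%:E.
Proof.
move=> h0 p0 pq qf; rewrite fineK// ge0_fin_numE; last first.
  by apply: esum_ge0 => k _; rewrite lee_fin mulr_ge0.
apply: le_lt_trans qf; apply: le_esum => k _; rewrite lee_fin ler_wpM2r//.
Qed.

Lemma split_fine (h p q : T -> R) : (forall k, 0 <= h k)%R -> (forall k, 0 <= p k)%R ->
  (forall k, p k <= q k)%R ->
  \esum_(k in [set: T]) (q k * h k)%:E < +oo ->
  fine (\esum_(k in [set: T]) (p k * h k)%:E) =
  (fine (\esum_(k in [set: T]) (q k * h k)%:E) -
   fine (\esum_(k in [set: T]) ((q k - p k) * h k)%:E))%R.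
Proof.
move=> h0 p0 pq qf.
have e : \esum_(k in [set: T]) (q k * h k)%:E =
   \esum_(k in [set: T]) ((q k - p k) * h k)%:E + \esum_(k in [set: T]) (p k * h k)%:E.
  rewrite -esumD; last 2 first.
  - by move=> k _; rewrite lee_fin mulr_ge0// subr_ge0.
  - by move=> k _; rewrite lee_fin mulr_ge0.
  by apply: eq_esum => k _; rewrite -EFinD; congr (_%:E); ring.
rewrite e (@fin_esum_le h p q h0 p0 pq qf) (@fin_esum_le h (fun k => q k - p k)%R q) //; last 2 first.
- by move=> k; rewrite subr_ge0.
- by move=> k; rewrite lerBlDr lerDl.
rewrite -EFinD /=; ring.
Qed.

Lemma mc_dec (h : T -> R) (s : nat -> T -> R) (sl : T -> R) :
  (forall k, 0 <= h k)%R -> (forall n k, 0 <= s n k)%R ->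
  (forall n k, s n.+1 k <= s n k)%R -> (forall k, s ^~ k @ \oo --> sl k) ->
  \esum_(k in [set: T]) (s 0%N k * h k)%:E < +oo ->
  (fun n => fine (\esum_(k in [set: T]) (s n k * h k)%:E)) @ \oo -->
    fine (\esum_(k in [set: T]) (sl k * h k)%:E).
Proof.
move=> h0 s0 sdec scv fin0.
have snd k : nonincreasing_seq (s ^~ k) by apply/nonincreasing_seqP => n; exact: sdec.
have sle n k : (s n k <= s 0%N k)%R by apply: snd.
have sl0 k : (0 <= sl k)%R by apply: (cvgr_to_ge (scv k)); apply: nearW.
have sll k : (sl k <= s 0%N k)%R by apply: (cvgr_to_le (scv k)); apply: nearW.
under eq_fun do rewrite (@split_fine h (s _) (s 0%N) h0 (s0 _) (sle _) fin0).
rewrite (@split_fine h sl (s 0%N) h0 sl0 sll fin0).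
apply: cvgB; first exact: cvg_cst.
apply: (@mc_inc h (fun n k => s 0%N k - s n k)%R (fun k => s 0%N k - sl k)%R) => //.
- by move=> n k; rewrite subr_ge0.
- by move=> n k; rewrite lerB.
- by move=> k; apply: cvgB => //; exact: cvg_cst.
- apply: le_lt_trans fin0; apply: le_esum => k _; rewrite lee_fin ler_wpM2r//.
  by rewrite lerBlDr lerDl.
Qed.

Lemma esum_ge0R (I : set T) (f : T -> R) : (forall i, 0 <= f i)%R -> 0 <= \esum_(i in I) (f i)%:E.
Proof. by move=> f0; apply: esum_ge0 => i _; rewrite lee_fin. Qed.

Lemma comb2 (A B : T -> R) (x y c : R) : (forall k, 0 <= A k)%R -> (forall k, 0 <= B k)%R ->
  (0 <= x)%R -> (0 <= y)%R -> (0 <= c)%R ->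
  x%:E * (c%:E * \esum_(k in [set: T]) (A k)%:E) + y%:E * (c%:E * \esum_(k in [set: T]) (B k)%:E)
  = c%:E * \esum_(k in [set: T]) (x * A k + y * B k)%:E.
Proof.
move=> A0 B0 x0 y0 c0.
have -> : \esum_(k in [set: T]) (x * A k + y * B k)%:E =
  \esum_(k in [set: T]) ((x * A k)%:E + (y * B k)%:E) by apply: eq_esum => k _; rewrite EFinD.
rewrite esumD; last 2 first.
- by move=> k _; rewrite lee_fin mulr_ge0.
- by move=> k _; rewrite lee_fin mulr_ge0.
rewrite !esumZ // ge0_muleDr; last 2 first.
- by rewrite mule_ge0 // esum_ge0R.
- by rewrite mule_ge0 // esum_ge0R.
by congr (_ + _); rewrite muleCA.
Qed.

Lemma comb3 (A B C : T -> R) (x y z c : R) : (forall k, 0 <= A k)%R -> (forall k, 0 <= B k)%R ->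
  (forall k, 0 <= C k)%R ->
  (0 <= x)%R -> (0 <= y)%R -> (0 <= z)%R -> (0 <= c)%R ->
  x%:E * (c%:E * \esum_(k in [set: T]) (A k)%:E) + y%:E * (c%:E * \esum_(k in [set: T]) (B k)%:E)
  + z%:E * (c%:E * \esum_(k in [set: T]) (C k)%:E)
  = c%:E * \esum_(k in [set: T]) (x * A k + y * B k + z * C k)%:E.
Proof.
move=> A0 B0 C0 x0 y0 z0 c0.
have -> : \esum_(k in [set: T]) (x * A k + y * B k + z * C k)%:E =
  \esum_(k in [set: T]) ((x * A k + y * B k)%:E + (z * C k)%:E) by apply: eq_esum => k _; rewrite EFinD.
rewrite esumD; last 2 first.
- by move=> k _; rewrite lee_fin addr_ge0 // mulr_ge0.
- by move=> k _; rewrite lee_fin mulr_ge0.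
rewrite ge0_muleDr; last 2 first.
- by apply: esum_ge0R => k; rewrite addr_ge0 // mulr_ge0.
- by apply: esum_ge0R => k; rewrite mulr_ge0.
rewrite -comb2 // esumZ //; congr (_ + _); exact: muleCA.
Qed.

Lemma esum_sub_le (I : set T) (f : T -> R) : (forall k, 0 <= f k)%R ->
  \esum_(k in I) (f k)%:E <= \esum_(k in [set: T]) (f k)%:E.
Proof.
move=> f0; rewrite esum_mkcond; apply: le_esum => k _.
by case: ifP => // _; rewrite lee_fin.
Qed.

Lemma esum_fin_le (I : set T) (f g : T -> R) : (forall k, I k -> 0 <= f k <= g k)%R ->
  \esum_(k in I) (g k)%:E < +oo -> \esum_(k in I) (f k)%:E < +oo.
Proof.
move=> fg gf; apply: le_lt_trans gf; apply: le_esum => k /fg /andP[_ h].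
by rewrite lee_fin.
Qed.
End Gen.


Section Alg.
Variable R : realType.


Definition Fc (a bq al b : R) (g x y : R[i]) : R :=
  2^-1 * (a * cabs2 x) + al / 2 * cabs2 (x + y - g) + b / 2 * (bq * cabs2 y).

Lemma Fc_id (a bq al b : R) (g x y : R[i]) :
  0 < a -> 0 < bq -> 0 < al -> 0 < b ->
  let D := a * b * bq + al * b * bq + al * a in
  let X := ((al * b * bq / D)%:C)%C * g in
  let Y := ((al * a / D)%:C)%C * g in
  Fc a bq al b g x y = Fc a bq al b g X Y + 2^-1 * (a * cabs2 (x - X)) + b / 2 * (bq * cabs2 (y - Y))
     + al / 2 * cabs2 ((x - X) + (y - Y)).
Proof.
move=> a0 bq0 al0 b0 D X Y.
have D0 : D != 0 by rewrite /D; apply: lt0r_neq0; rewrite !addr_gt0 // !mulr_gt0.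
rewrite /Fc /X /Y /cabs2; clear X Y; case: g => g1 g2; case: x => x1 x2; case: y => y1 y2 /=.
rewrite /D in D0 *; field; exact: D0.
Qed.

Lemma cab_ge0 (z : R[i]) : 0 <= cabs2 z.
Proof. by rewrite /cabs2 addr_ge0 // sqr_ge0. Qed.

Lemma cab_scale (t : R) (z : R[i]) : cabs2 ((t%:C)%C * z) = t ^+ 2 * cabs2 z.
Proof. by case: z => z1 z2; rewrite /cabs2 /=; ring. Qed.

Lemma cab_eq0 (z : R[i]) : cabs2 z = 0 -> z = 0.
Proof.
case: z => z1 z2; rewrite /cabs2 /= => h.
have h1 : z1 = 0 by nra.
have h2 : z2 = 0 by nra.
by rewrite h1 h2.
Qed.

Lemma FcE_id (a al : R) (g x : R[i]) : 0 < a -> 0 < al ->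
  let X := ((al / (a + al))%:C)%C * g in
  2^-1 * (a * cabs2 x) + al / 2 * cabs2 (x - g) =
  2^-1 * (a * cabs2 X) + al / 2 * cabs2 (X - g) + (a + al) / 2 * cabs2 (x - X).
Proof.
move=> a0 al0 X; have D0 : a + al != 0 by apply: lt0r_neq0; rewrite addr_gt0.
rewrite /X /cabs2; clear X; case: g => g1 g2; case: x => x1 x2 /=.
field; exact: D0.
Qed.

Lemma tb_bounds (a bq al b : R) : 0 < a -> 0 < bq -> 0 < al -> 0 < b ->
  let D := a * b * bq + al * b * bq + al * a in
  [/\ 0 <= al * b * bq / D, al * b * bq / D <= 1, a * (al * b * bq / D) ^+ 2 <= al,
      0 <= al * a / D & al * a / D <= 1].
Proof.
move=> a0 bq0 al0 b0 D.
have D0 : 0 < D by rewrite /D !addr_gt0 // !mulr_gt0.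
have p1 : 0 < a * b * bq by rewrite !mulr_gt0.
have p2 : 0 < al * b * bq by rewrite !mulr_gt0.
have p3 : 0 < al * a by rewrite !mulr_gt0.
split.
- by rewrite divr_ge0 // ?ltW // !mulr_gt0.
- by rewrite ler_pdivrMr // mul1r /D; lra.
- rewrite expr_div_n mulrA ler_pdivrMr ?exprn_gt0 //.
  have h1 : b * bq * (a + al) <= D by rewrite /D; lra.
  have h2 : a * al <= (a + al) ^+ 2 by nra.
  have h3 : (b * bq * (a + al)) ^+ 2 <= D ^+ 2.
    rewrite ler_sqr ?nnegrE //; last exact: ltW. by rewrite ltW // !mulr_gt0 // addr_gt0.
  have h4 : 0 < (b * bq) ^+ 2 by rewrite exprn_gt0 // !mulr_gt0.
  have h5 : a * al * (b * bq) ^+ 2 <= (b * bq * (a + al)) ^+ 2.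
    have -> : (b*bq*(a+al))^+2 = (b*bq)^+2 * (a+al)^+2 by ring.
    rewrite mulrC; apply: ler_wpM2l => //; exact: ltW.
  have h6 : a * al * (b * bq) ^+ 2 <= D ^+ 2 by apply: le_trans h5 h3.
  have -> : a * (al * b * bq) ^+ 2 = al * (a * al * (b * bq) ^+ 2) by ring.
  by rewrite ler_wpM2l // ltW.
- by rewrite divr_ge0 // ?ltW // !mulr_gt0.
- by rewrite ler_pdivrMr // mul1r /D; lra.
Qed.

Lemma t0_bounds (a al : R) : 0 < a -> 0 < al ->
  [/\ 0 <= al / (a + al), al / (a + al) <= 1 & a * (al / (a + al)) ^+ 2 <= al].
Proof.
move=> a0 al0; have D0 : 0 < a + al by rewrite addr_gt0.
split.
- by rewrite divr_ge0 // ltW.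
- by rewrite ler_pdivrMr // mul1r; nra.
- rewrite expr_div_n mulrA ler_pdivrMr ?exprn_gt0 //.
  have h2 : a * al <= (a + al) ^+ 2 by nra.
  have -> : a * al ^+ 2 = al * (a * al) by ring.
  by rewrite ler_wpM2l // ltW.
Qed.

Lemma frac_le (x y D D' : R) : 0 < D -> 0 < D' -> x * D' <= y * D -> x / D <= y / D'.
Proof.
move=> h h' H.
have -> : x / D = (x * D') * (D * D')^-1 by field; apply/andP; split; apply: lt0r_neq0.
have -> : y / D' = (y * D) * (D * D')^-1 by field; apply/andP; split; apply: lt0r_neq0.
by rewrite ler_pM2r // invr_gt0 mulr_gt0.
Qed.

Lemma tb_mono (a bq al b b' : R) : 0 < a -> 0 < bq -> 0 < al -> 0 < b -> b <= b' ->
  al * b * bq / (a * b * bq + al * b * bq + al * a) <=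
  al * b' * bq / (a * b' * bq + al * b' * bq + al * a).
Proof.
move=> a0 bq0 al0 b0 bb.
have b'0 : 0 < b' by apply: lt_le_trans bb.
apply: frac_le; try by rewrite !addr_gt0 // !mulr_gt0.
have h0 : 0 <= b' - b by rewrite subr_ge0.
have hp : 0 < al * a * al * bq by rewrite !mulr_gt0.
have h := mulr_ge0 (ltW hp) h0.
nra.
Qed.

Lemma sb_mono (a bq al b b' : R) : 0 < a -> 0 < bq -> 0 < al -> 0 < b -> b <= b' ->
  al * a / (a * b' * bq + al * b' * bq + al * a) <=
  al * a / (a * b * bq + al * b * bq + al * a).
Proof.
move=> a0 bq0 al0 b0 bb.
have b'0 : 0 < b' by apply: lt_le_trans bb.
apply: frac_le; try by rewrite !addr_gt0 // !mulr_gt0.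
have h0 : 0 <= b' - b by rewrite subr_ge0.
have hp : 0 < al * a * (a + al) * bq by rewrite !mulr_gt0 // addr_gt0.
have h := mulr_ge0 (ltW hp) h0.
nra.
Qed.

Lemma mx_l (x y : R) : y <= x -> Num.max x y = x.
Proof. by move=> h; rewrite /Order.max ltNge h. Qed.

Lemma mx_r (x y : R) : x <= y -> Num.max x y = y.
Proof. by move=> h; rewrite /Order.max; case: ltP => // h'; apply/le_anti; rewrite h h'. Qed.

Lemma wb_real (a al x y u v : R) : 0 < a -> 0 < al ->
  al / (a + al) * Num.max (a * (x * u + y * v)) 0 <=
  2^-1 * (a * (u ^+ 2 + v ^+ 2)) + al * (x ^+ 2 + y ^+ 2).
Proof.
move=> a0 al0; have D0 : 0 < a + al by rewrite addr_gt0.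
have B0 : 0 <= 2^-1 * (a * (u ^+ 2 + v ^+ 2)) + al * (x ^+ 2 + y ^+ 2).
  have := sqr_ge0 u; have := sqr_ge0 v; have := sqr_ge0 x; have := sqr_ge0 y; nra.
have [h|h] := (leP (a * (x * u + y * v)) 0).
  by rewrite mulr0.
rewrite mulrAC ler_pdivrMr //.
have k1 : 0 <= (x - u / 2) ^+ 2 + (y - v / 2) ^+ 2 + (u ^+ 2 + v ^+ 2) / 4.
  have := sqr_ge0 u; have := sqr_ge0 v; have := sqr_ge0 (x - u / 2); have := sqr_ge0 (y - v / 2); lra.
have k2 : 0 <= a * a / 2 * (u ^+ 2 + v ^+ 2) + al * al * (x ^+ 2 + y ^+ 2).
  have := sqr_ge0 u; have := sqr_ge0 v; have := sqr_ge0 x; have := sqr_ge0 y; nra.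
have k3 : 0 <= a * al * ((x - u / 2) ^+ 2 + (y - v / 2) ^+ 2 + (u ^+ 2 + v ^+ 2) / 4).
  by rewrite mulr_ge0 // ?mulr_ge0 // ltW.
nra.
Qed.

Lemma wb_real2 (x y u v : R) :
  Num.max (x * u + y * v) 0 <= 2^-1 * ((u ^+ 2 + v ^+ 2) + (x ^+ 2 + y ^+ 2)).
Proof.
have B0 : 0 <= 2^-1 * ((u ^+ 2 + v ^+ 2) + (x ^+ 2 + y ^+ 2)).
  have := sqr_ge0 u; have := sqr_ge0 v; have := sqr_ge0 x; have := sqr_ge0 y; lra.
have [h|h] := (leP (x * u + y * v) 0) => //.

have k1 : 0 <= (x - u) ^+ 2 + (y - v) ^+ 2 by have := sqr_ge0 (x - u); have := sqr_ge0 (y - v); lra.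
nra.
Qed.
End Alg.


Section Torus.
Variable R : realType.
Variable d : nat.

Lemma fsq_ge1 (k : freq d) : k != 0 -> 1 <= fsq R k.
Proof.
move=> hk.
have [j hj] : exists j, k ord0 j != 0.
  case: (pselect (exists j, k ord0 j != 0)) => // hn; exfalso; move/negP: hk; apply.
  apply/eqP/matrixP => i j; rewrite (ord1 i) mxE; apply/eqP/negPn/negP => h; apply: hn; exists j.
  exact: h.
rewrite /fsq (bigD1 j) //=.
have h1 : 1 <= (k ord0 j)%:~R ^+ 2 :> R.
  rewrite -rmorphXn /= ler1z; lia.
have h2 : 0 <= \sum_(i < d | i != j) ((k ord0 i)%:~R ^+ 2 : R).
  by apply: sumr_ge0 => i _; exact: sqr_ge0.
lra.
Qed.

Lemma fsq_gt0 (k : freq d) : k != 0 -> 0 < fsq R k.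
Proof. by move=> /fsq_ge1 h; apply: lt_le_trans h. Qed.

Lemma powR_half (x s : R) : 0 < x -> (x `^ (s / 2)) ^+ 2 = x `^ s.
Proof.
move=> x0; rewrite expr2 -powRD; last by apply/implyP => _; rewrite gt_eqF.
by congr (_ `^ _); field.
Qed.

Lemma cabs2_fraclap s (u : coef R d) k : k != 0 ->
  cabs2 (fraclap (s / 2) u k) = fsq R k `^ s * cabs2 (u k).
Proof. by move=> hk; rewrite /fraclap cab_scale powR_half // fsq_gt0. Qed.

Lemma cabs2_Rop s (v : coef R d) k : k != 0 ->
  cabs2 (Rop (s / 2) v k) = fsq R k `^ s * cabs2 (v k).
Proof. by move=> hk; rewrite /Rop (negbTE hk) cab_scale powR_half // fsq_gt0. Qed.

Lemma pow_ge1 (k : freq d) s : k != 0 -> 0 <= s -> 1 <= fsq R k `^ s.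
Proof.
move=> hk s0; rewrite -(powRr0 (fsq R k)); apply: ler_powR => //; exact: fsq_ge1.
Qed.

Lemma pow_le1 (k : freq d) s : k != 0 -> s <= 0 -> fsq R k `^ s <= 1.
Proof.
move=> hk s0; rewrite -(powRr0 (fsq R k)); apply: ler_powR => //; exact: fsq_ge1.
Qed.

Lemma pow_gt0 (k : freq d) s : k != 0 -> 0 < fsq R k `^ s.
Proof. by move=> hk; apply: powR_gt0; exact: fsq_gt0. Qed.

Lemma torus_c_gt0 : 0 < torus_c R d.
Proof. by rewrite /torus_c invr_gt0 exprn_gt0 // mulr_gt0 // pi_gt0. Qed.

End Torus.

Set Implicit Arguments. Unset Strict Implicit.



Section Ident.
Variable R : realType.
Variable d : nat.

Definition aa (s : R) (k : freq d) : R := fsq R k `^ s.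
Definition DD (s1 s2 al b : R) k := aa s1 k * b * aa s2 k + al * b * aa s2 k + al * aa s1 k.
Definition Tb (s1 s2 al b : R) (k : freq d) : R :=
  if k == 0 then 0 else al * b * aa s2 k / DD s1 s2 al b k.
Definition Sb (s1 s2 al b : R) (k : freq d) : R :=
  if k == 0 then 0 else al * aa s1 k / DD s1 s2 al b k.
Definition T0 (s1 al : R) (k : freq d) : R :=
  if k == 0 then 0 else al / (aa s1 k + al).
Definition scl (t : freq d -> R) (g : coef R d) : coef R d := fun k => ((t k)%:C)%C * g k.

Lemma cabs20 : cabs2 (0 : R[i]) = 0.
Proof. by rewrite /cabs2 /= expr0n /= addr0. Qed.

Lemma scl0 t g : t 0 = 0 -> scl t g 0 = 0.
Proof. by move=> h; rewrite /scl h mul0r. Qed.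

Lemma L2fin (g : coef R d) : in_L2 g -> (\esum_(k in [set: freq d]) (cabs2 (g k))%:E < +oo)%E.
Proof.
rewrite /in_L2 /sqnormL2.
have : (0 <= \esum_(k in [set: freq d]) (cabs2 (g k))%:E)%E by apply: esum_ge0R => k; exact: cab_ge0.
case: (\esum_(k in [set: freq d]) (cabs2 (g k))%:E) => [r| |] //; first by move=> *; rewrite ltry.
by move=> _; rewrite gt0_muley ?lte_fin ?torus_c_gt0.
Qed.

Lemma sq_le (u w : coef R d) : (forall k, cabs2 (u k) <= cabs2 (w k)) -> (sqnormL2 u <= sqnormL2 w)%E.
Proof.
move=> h; rewrite /sqnormL2; apply: lee_wpmul2l; first by rewrite lee_fin ltW // torus_c_gt0.
by apply: le_esum => k _; rewrite lee_fin.
Qed.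

Lemma aa_gt0 s k : k != 0 -> 0 < aa s k.
Proof. exact: pow_gt0. Qed.

Lemma aa_ge0 s k : 0 <= aa s k.
Proof. exact: powR_ge0. Qed.


Lemma sqscale_le (x c : R) : 0 <= x <= 1 -> 0 <= c -> x ^+ 2 * c <= c.
Proof.
move=> /andP[x0 x1] c0; rewrite -[X in _ <= X]mul1r ler_wpM2r //.
by rewrite expr_le1.
Qed.

Lemma finZ (x : R) (f : freq d -> R) : (\esum_(k in [set: freq d]) (f k)%:E < +oo)%E ->
  (forall k, 0 <= f k) -> 0 <= x ->
  (\esum_(k in [set: freq d]) (x * f k)%:E < +oo)%E.
Proof.
move=> h f0 x0; rewrite esumZ //; apply: lte_mul_pinfty => //; by rewrite lee_fin.
Qed.

Lemma ident (s1 s2 al b : R) (g u v : coef R d) :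
  0 <= s1 -> s2 <= 0 -> 0 < al -> 0 < b -> in_L2 g ->
  minimizes_I s1 s2 al b g u v ->
  u = scl (Tb s1 s2 al b) g /\ v = scl (Sb s1 s2 al b) g.
Proof.
move=> s1p s2n al0 b0 gL [Hu Hv Hmin].
have Gf := L2fin gL.
have cg0 k : 0 <= cabs2 (g k) by exact: cab_ge0.
set t := Tb s1 s2 al b; set s := Sb s1 s2 al b.
set us := scl t g; set vs := scl s g.
have tk k : k != 0 -> [/\ 0 <= t k, t k <= 1, aa s1 k * t k ^+ 2 <= al, 0 <= s k & s k <= 1].
  move=> hk; rewrite /t /s /Tb /Sb (negbTE hk).
  have h := @tb_bounds R (aa s1 k) (aa s2 k) al b (@aa_gt0 s1 k hk) (@aa_gt0 s2 k hk) al0 b0; simpl in h; rewrite /DD; exact: h.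
have t0 : t 0 = 0 by rewrite /t /Tb eqxx.
have s0 : s 0 = 0 by rewrite /s /Sb eqxx.
have us0 : us 0 = 0 := @scl0 t g t0.
have vs0 : vs 0 = 0 := @scl0 s g s0.
have Hus : H0 s1 us.
  split => //.
  - apply: (le_lt_trans (@sq_le _ g _)) gL => k.
    rewrite /us /scl cab_scale; case: (k =P 0) => [->|/eqP hk].
      by rewrite t0 expr0n /= mul0r.
    by have [? ? _ _ _] := tk k hk; apply: sqscale_le => //; apply/andP.
  - apply: (@esum_fin_le R (freq d) _ _ (fun k => al * cabs2 (g k))).
      move=> k /= hk; rewrite /us /scl cab_scale mulrA.
      have [? ? h _ _] := tk k hk.
      rewrite mulr_ge0 ?mulr_ge0 ?powR_ge0 ?sqr_ge0 //=.
      by rewrite ler_wpM2r.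
    apply: (le_lt_trans (@esum_sub_le R (freq d) _ (fun k => al * cabs2 (g k)) _)).
      by move=> k; rewrite mulr_ge0 // ltW.
    by apply: finZ => //; rewrite ltW.
have Hvs : Hdot_L20 s2 vs.
  split => //.
  - apply: (le_lt_trans (@sq_le _ g _)) gL => k.
    rewrite /vs /scl cab_scale; case: (k =P 0) => [->|/eqP hk].
      by rewrite s0 expr0n /= mul0r.
    by have [_ _ _ ? ?] := tk k hk; apply: sqscale_le => //; apply/andP.
  - apply: (@esum_fin_le R (freq d) _ _ (fun k => cabs2 (g k))).
      move=> k /= hk; rewrite /vs /scl cab_scale.
      have [_ _ _ h1 h2] := tk k hk.
      rewrite mulr_ge0 ?mulr_ge0 ?powR_ge0 ?sqr_ge0 //=.
      apply: (@le_trans _ _ (s k ^+ 2 * cabs2 (g k))).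
        apply: ler_piMl; [by rewrite mulr_ge0 ?sqr_ge0 | exact: pow_le1].
      apply: sqscale_le => //; exact/andP.
    exact: (le_lt_trans (@esum_sub_le R (freq d) _ (fun k => cabs2 (g k)) _)).
pose F (u' v' : coef R d) k := 2^-1 * cabs2 (fraclap (s1 / 2) u' k) +
   al / 2 * cabs2 (u' k + v' k - g k) + b / 2 * cabs2 (Rop (s2 / 2) v' k).
have F0 u' v' k : 0 <= F u' v' k.
  by rewrite /F !addr_ge0 // mulr_ge0 ?cab_ge0 // ?invr_ge0 ?divr_ge0 // ltW.
have IF u' v' : Ibeta s1 s2 al b g u' v' =
    ((torus_c R d)%:E * \esum_(k in [set: freq d]) (F u' v' k)%:E)%E.
  rewrite /Ibeta /sqnormL2.
  apply: (@comb3 R (freq d) (fun k => cabs2 (fraclap (s1 / 2) u' k))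
     (fun k => cabs2 (u' k + v' k - g k)) (fun k => cabs2 (Rop (s2 / 2) v' k))).
  - by move=> k; exact: cab_ge0.
  - by move=> k; exact: cab_ge0.
  - by move=> k; exact: cab_ge0.
  - by rewrite invr_ge0.
  - by rewrite divr_ge0 // ltW.
  - by rewrite divr_ge0 // ltW.
  - by rewrite ltW // torus_c_gt0.
pose dl (u' v' : coef R d) k := 2^-1 * (aa s1 k * cabs2 (u' k - us k)) +
   b / 2 * (aa s2 k * cabs2 (v' k - vs k)).
pose rs (u' v' : coef R d) k := al / 2 * cabs2 ((u' k - us k) + (v' k - vs k)).
have dl0 u' v' k : 0 <= dl u' v' k.
  by rewrite /dl addr_ge0 // !mulr_ge0 ?aa_ge0 ?cab_ge0 // ?invr_ge0 ?divr_ge0 // ltW.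
have rs0 u' v' k : 0 <= rs u' v' k.
  by rewrite /rs mulr_ge0 ?cab_ge0 // divr_ge0 // ltW.
have Fdec u' v' k : u' 0 = 0 -> v' 0 = 0 -> F u' v' k = F us vs k + dl u' v' k + rs u' v' k.
  move=> hu hv; case: (k =P 0) => [->|/eqP hk].
    by rewrite /F /dl /rs /fraclap /Rop hu hv us0 vs0 subrr addr0 cabs20 !mulr0 !addr0.
  rewrite /F !cabs2_fraclap // !cabs2_Rop // /dl /rs /us /vs /scl /t /s /Tb /Sb (negbTE hk).
  have h := @Fc_id R (aa s1 k) (aa s2 k) al b (g k) (u' k) (v' k) (@aa_gt0 s1 k hk) (@aa_gt0 s2 k hk) al0 b0.
  simpl in h; rewrite /Fc in h; rewrite /DD -!addrA; rewrite -!addrA in h; exact: h.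
have zu : u 0 = 0 by case: Hu.
have zv : v 0 = 0 by case: Hv.
have cfin : (torus_c R d)%:E \is a fin_num by [].
have cpos : (0 < (torus_c R d)%:E)%E by rewrite lte_fin torus_c_gt0.
have Hle : (\esum_(k in [set: freq d]) (F u v k)%:E <= \esum_(k in [set: freq d]) (F us vs k)%:E)%E.
  by have := Hmin us vs Hus Hvs; rewrite !IF lee_pmul2l.
have Fb k : F us vs k <= al / 2 * cabs2 (g k).
  have := Fdec (fun _ => 0) (fun _ => 0) k erefl erefl.
  have -> : F (fun _ => 0) (fun _ => 0) k = al / 2 * cabs2 (g k).
    rewrite /F /fraclap /Rop mulr0 cabs20 mulr0 add0r; case: ifP => _; rewrite ?mulr0 cabs20 mulr0 addr0;
    by rewrite add0r sub0r; congr (_ * _); case: (g k) => ? ?; rewrite /cabs2 /=; ring.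
  by move=> ->; rewrite -addrA lerDl addr_ge0.
have Ffin : (\esum_(k in [set: freq d]) (F us vs k)%:E < +oo)%E.
  apply: (@esum_fin_le R (freq d) _ _ (fun k => al / 2 * cabs2 (g k))).
    by move=> k _; rewrite F0 Fb.
  by apply: finZ => //; rewrite divr_ge0 // ltW.
have Hsplit : \esum_(k in [set: freq d]) (F u v k)%:E =
   (\esum_(k in [set: freq d]) (F us vs k)%:E + \esum_(k in [set: freq d]) (dl u v k)%:E
   + \esum_(k in [set: freq d]) (rs u v k)%:E)%E.
  transitivity (\esum_(k in [set: freq d]) ((F us vs k)%:E + (dl u v k)%:E + (rs u v k)%:E))%E.
    by apply: eq_esum => k _; rewrite (Fdec u v k zu zv) !EFinD.
  rewrite esumD; last 2 first.
  - by move=> k _; rewrite adde_ge0 // lee_fin.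
  - by move=> k _; rewrite lee_fin.
  rewrite esumD // => k _; rewrite lee_fin //.
have Hdl : (\esum_(k in [set: freq d]) (dl u v k)%:E <= 0)%E.
  have h1 : (\esum_(k in [set: freq d]) (F us vs k)%:E + \esum_(k in [set: freq d]) (dl u v k)%:E
       <= \esum_(k in [set: freq d]) (F us vs k)%:E + 0)%E.
    rewrite adde0; apply: le_trans Hle; rewrite Hsplit; apply: leeDl.
    by apply: esum_ge0R.
  by rewrite leeD2lE // in h1; rewrite ge0_fin_numE // esum_ge0R.
have dk k : dl u v k = 0.
  apply/le_anti; rewrite dl0 andbT -lee_fin; apply: le_trans Hdl.
  apply: esum_ge; exists [set k]; first by split => //; exact: finite_set1.
  by rewrite fsbig_set1.
split; apply: funext => k; (case: (k =P 0) => [->|/eqP hk]; [by rewrite ?zu ?zv ?us0 ?vs0 |]).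
- have := dk k; rewrite /dl => /eqP; rewrite paddr_eq0; last 2 first.
  + by apply: mulr_ge0; [rewrite invr_ge0 | apply: mulr_ge0; [exact: aa_ge0 | exact: cab_ge0]].
  + by apply: mulr_ge0; [rewrite divr_ge0 // ltW | apply: mulr_ge0; [exact: aa_ge0 | exact: cab_ge0]].
  case/andP; rewrite !mulf_eq0 invr_eq0 pnatr_eq0 /= (gt_eqF (@aa_gt0 s1 k hk)) /=.
  by move=> /eqP /cab_eq0 /eqP; rewrite subr_eq0 => /eqP.
- have := dk k; rewrite /dl => /eqP; rewrite paddr_eq0; last 2 first.
  + by apply: mulr_ge0; [rewrite invr_ge0 | apply: mulr_ge0; [exact: aa_ge0 | exact: cab_ge0]].
  + by apply: mulr_ge0; [rewrite divr_ge0 // ltW | apply: mulr_ge0; [exact: aa_ge0 | exact: cab_ge0]].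
  case/andP => _; rewrite !mulf_eq0 invr_eq0 pnatr_eq0 /= (gt_eqF (@aa_gt0 s2 k hk)) (gt_eqF b0) /=.
  by move=> /eqP /cab_eq0 /eqP; rewrite subr_eq0 => /eqP.
Qed.
End Ident.



Section W.
Variable R : realType.
Variable d : nat.

Lemma Tb_lim (s1 s2 al : R) (beta : nat -> R) (k : freq d) : 0 < al ->
  (forall n, 0 < beta n) -> beta @ \oo --> +oo ->
  (fun n => Tb s1 s2 al (beta n) k) @ \oo --> T0 s1 al k.
Proof.
move=> al0 b0 bcv; rewrite /Tb /T0; case: eqP => [_|/eqP hk]; first exact: cvg_cst.
have a0 := @aa_gt0 _ _ s1 k hk; have bq0 := @aa_gt0 _ _ s2 k hk.
set a := aa s1 k; set bq := aa s2 k.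
have hinv : (fun n => (beta n)^-1) @ \oo --> 0.
  by apply/gtr0_cvgV0 => //; apply: nearW.
have e n : al * beta n * bq / DD s1 s2 al (beta n) k =
    al * bq * (a * bq + al * bq + al * a * (beta n)^-1)^-1.
  have bn := b0 n.
  rewrite /DD -/a -/bq; field.
  by apply/andP; split; apply: lt0r_neq0; rewrite // ?addr_gt0 ?mulr_gt0 ?addr_gt0 ?mulr_gt0.
under eq_fun do rewrite e.
have -> : al / (a + al) = al * bq * (a * bq + al * bq + al * a * 0)^-1.
  by field; apply/andP; split; apply: lt0r_neq0; rewrite ?addr_gt0 ?mulr_gt0.
apply: cvgMl_tmp; apply: cvgV; first by rewrite mulr0 addr0 lt0r_neq0 // addr_gt0 // mulr_gt0.
by apply: cvgD; [exact: cvg_cst | exact: cvgMl_tmp].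
Qed.


Lemma Sb_lim (s1 s2 al : R) (beta : nat -> R) (k : freq d) : 0 < al ->
  (forall n, 0 < beta n) -> beta @ \oo --> +oo ->
  (fun n => Sb s1 s2 al (beta n) k) @ \oo --> 0.
Proof.
move=> al0 b0 bcv; rewrite /Sb; case: eqP => [_|/eqP hk]; first exact: cvg_cst.
have a0 := @aa_gt0 _ _ s1 k hk; have bq0 := @aa_gt0 _ _ s2 k hk.
set a := aa s1 k; set bq := aa s2 k.
have hinv : (fun n => (beta n)^-1) @ \oo --> 0.
  by apply/gtr0_cvgV0 => //; apply: nearW.
have e n : al * a / DD s1 s2 al (beta n) k =
    al * a * (beta n)^-1 * (a * bq + al * bq + al * a * (beta n)^-1)^-1.
  have bn := b0 n.
  rewrite /DD -/a -/bq; field.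
  by apply/andP; split; apply: lt0r_neq0; rewrite // ?addr_gt0 ?mulr_gt0 ?addr_gt0 ?mulr_gt0.
under eq_fun do rewrite e.
have -> : 0 = al * a * 0 * (a * bq + al * bq + al * a * 0)^-1 :> R by rewrite !mulr0 mul0r.
apply: cvgM; first exact: cvgMl_tmp.
apply: cvgV; first by rewrite mulr0 addr0 lt0r_neq0 // addr_gt0 // mulr_gt0.
by apply: cvgD; [exact: cvg_cst | exact: cvgMl_tmp].
Qed.

Lemma Tb_ge0 (s1 s2 al b : R) (k : freq d) : 0 < al -> 0 < b -> 0 <= Tb s1 s2 al b k.
Proof.
move=> al0 b0; rewrite /Tb; case: eqP => // /eqP hk.
have a0 := @aa_gt0 _ _ s1 k hk; have bq0 := @aa_gt0 _ _ s2 k hk.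
by rewrite divr_ge0 // ltW // ?mulr_gt0 // /DD !addr_gt0 // !mulr_gt0.
Qed.

Lemma Sb_ge0 (s1 s2 al b : R) (k : freq d) : 0 < al -> 0 < b -> 0 <= Sb s1 s2 al b k.
Proof.
move=> al0 b0; rewrite /Sb; case: eqP => // /eqP hk.
have a0 := @aa_gt0 _ _ s1 k hk; have bq0 := @aa_gt0 _ _ s2 k hk.
by rewrite divr_ge0 // ltW // ?mulr_gt0 // /DD !addr_gt0 // !mulr_gt0.
Qed.

Lemma T0_ge0 (s1 al : R) (k : freq d) : 0 < al -> 0 <= T0 s1 al k.
Proof.
move=> al0; rewrite /T0; case: eqP => // /eqP hk.
have a0 := @aa_gt0 _ _ s1 k hk.
by rewrite divr_ge0 // ltW // addr_gt0.
Qed.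

Lemma Tb_inc (s1 s2 al b b' : R) (k : freq d) : 0 < al -> 0 < b -> b <= b' ->
  Tb s1 s2 al b k <= Tb s1 s2 al b' k.
Proof.
move=> al0 b0 bb; rewrite /Tb; case: eqP => // /eqP hk.
have a0 := @aa_gt0 _ _ s1 k hk; have bq0 := @aa_gt0 _ _ s2 k hk.
exact: (@tb_mono R (aa s1 k) (aa s2 k) al b b').
Qed.

Lemma Sb_dec (s1 s2 al b b' : R) (k : freq d) : 0 < al -> 0 < b -> b <= b' ->
  Sb s1 s2 al b' k <= Sb s1 s2 al b k.
Proof.
move=> al0 b0 bb; rewrite /Sb; case: eqP => // /eqP hk.
have a0 := @aa_gt0 _ _ s1 k hk; have bq0 := @aa_gt0 _ _ s2 k hk.
exact: (@sb_mono R (aa s1 k) (aa s2 k) al b b').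
Qed.

Lemma maxr0_ge0 (x : R) : 0 <= Num.max x 0.
Proof. by have [h|h] := leP x 0; [rewrite lexx|exact: ltW]. Qed.

Lemma rsum_scale (t r : freq d -> R) : (forall k, 0 <= t k) ->
  rsum (fun k => t k * r k) =
  fine (\esum_(k in [set: freq d]) (t k * Num.max (r k) 0)%:E) -
  fine (\esum_(k in [set: freq d]) (t k * Num.max (- r k) 0)%:E).
Proof.
move=> t0; rewrite /rsum; congr (fine _ - fine _); apply: eq_esum => k _; congr (_%:E).
  by rewrite maxr_pMr // mulr0.
by rewrite -mulrN maxr_pMr // mulr0.
Qed.

Lemma rsum_cvg_inc (t : nat -> freq d -> R) (tl r : freq d -> R) :
  (forall n k, 0 <= t n k) -> (forall n k, t n k <= t n.+1 k) ->
  (forall k, t ^~ k @ \oo --> tl k) ->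
  (\esum_(k in [set: freq d]) (tl k * Num.max (r k) 0)%:E < +oo)%E ->
  (\esum_(k in [set: freq d]) (tl k * Num.max (- r k) 0)%:E < +oo)%E ->
  (fun n => rsum (fun k => t n k * r k)) @ \oo --> rsum (fun k => tl k * r k).
Proof.
move=> t0 tinc tcv f1 f2.
have tl0 k : 0 <= tl k by apply: (cvgr_to_ge (tcv k)); apply: nearW.
under eq_fun do rewrite rsum_scale //.
rewrite rsum_scale //.
apply: cvgB.
  exact: (@mc_inc R (freq d) (fun k => Num.max (r k) 0) t tl (fun k => maxr0_ge0 _)).
exact: (@mc_inc R (freq d) (fun k => Num.max (- r k) 0) t tl (fun k => maxr0_ge0 _)).
Qed.

Lemma rsum_cvg_dec (t : nat -> freq d -> R) (tl r : freq d -> R) :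
  (forall n k, 0 <= t n k) -> (forall n k, t n.+1 k <= t n k) ->
  (forall k, t ^~ k @ \oo --> tl k) ->
  (\esum_(k in [set: freq d]) (t 0%N k * Num.max (r k) 0)%:E < +oo)%E ->
  (\esum_(k in [set: freq d]) (t 0%N k * Num.max (- r k) 0)%:E < +oo)%E ->
  (fun n => rsum (fun k => t n k * r k)) @ \oo --> rsum (fun k => tl k * r k).
Proof.
move=> t0 tdec tcv f1 f2.
have tl0 k : 0 <= tl k by apply: (cvgr_to_ge (tcv k)); apply: nearW.
under eq_fun do rewrite rsum_scale //.
rewrite rsum_scale //.
apply: cvgB.
  exact: (@mc_dec R (freq d) (fun k => Num.max (r k) 0) t tl (fun k => maxr0_ge0 _)).
exact: (@mc_dec R (freq d) (fun k => Num.max (- r k) 0) t tl (fun k => maxr0_ge0 _)).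
Qed.

End W.



Section X.
Variable R : realType.
Variable d : nat.

Lemma memNz (k : freq d) : (k \in [set k : freq d | k != 0]) = (k != 0).
Proof. by apply/idP/idP => [/set_mem|/mem_set]. Qed.

Lemma ReH sigma (t : freq d -> R) (g w : coef R d) :
  complex.Re (innerH sigma (scl t g) w) =
  rsum (fun k => t k * complex.Re (if k == 0 then 0 else ((fsq R k `^ sigma)%:C)%C * (g k * (w k)^*%C))).
Proof.
rewrite /innerH /csum /=; congr rsum; apply: funext => k.
case: (k == 0) => /=; first by rewrite mulr0.
rewrite /scl; case: (g k) => ? ?; case: (w k) => ? ? /=; ring.
Qed.

Lemma ImH sigma (t : freq d -> R) (g w : coef R d) :
  complex.Im (innerH sigma (scl t g) w) =
  rsum (fun k => t k * complex.Im (if k == 0 then 0 else ((fsq R k `^ sigma)%:C)%C * (g k * (w k)^*%C))).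
Proof.
rewrite /innerH /csum /=; congr rsum; apply: funext => k.
case: (k == 0) => /=; first by rewrite mulr0.
rewrite /scl; case: (g k) => ? ?; case: (w k) => ? ? /=; ring.
Qed.

Lemma ReL2 (t : freq d -> R) (g w : coef R d) :
  complex.Re (innerL2 (scl t g) w) =
  torus_c R d * rsum (fun k => t k * complex.Re (g k * (w k)^*%C)).
Proof.
rewrite /innerL2 /csum /=; rewrite mul0r subr0; congr (_ * rsum _); apply: funext => k.
rewrite /scl; case: (g k) => ? ?; case: (w k) => ? ? /=; ring.
Qed.

Lemma ImL2 (t : freq d -> R) (g w : coef R d) :
  complex.Im (innerL2 (scl t g) w) =
  torus_c R d * rsum (fun k => t k * complex.Im (g k * (w k)^*%C)).
Proof.
rewrite /innerL2 /csum /=; rewrite mul0r addr0; congr (_ * rsum _); apply: funext => k.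
rewrite /scl; case: (g k) => ? ?; case: (w k) => ? ? /=; ring.
Qed.


Lemma wbr (a al x y u v rho W G : R) : 0 < a -> 0 < al -> rho = a * (x * u + y * v) ->
  W = u ^+ 2 + v ^+ 2 -> G = x ^+ 2 + y ^+ 2 ->
  al / (a + al) * Num.max rho 0 <= 2^-1 * (a * W) + al * G.
Proof. by move=> a0 al0 -> -> ->; exact: (@wb_real R a al x y u v a0 al0). Qed.

Lemma wbr2 (x y u v rho W G : R) : rho = x * u + y * v ->
  W = u ^+ 2 + v ^+ 2 -> G = x ^+ 2 + y ^+ 2 ->
  Num.max rho 0 <= 2^-1 * (W + G).
Proof. by move=> -> -> ->; exact: (@wb_real2 R x y u v). Qed.

Lemma wbH_Re (s1 al : R) (g w : coef R d) (k : freq d) : 0 < al ->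
  T0 s1 al k * Num.max (complex.Re (if k == 0 then 0 else ((fsq R k `^ s1)%:C)%C * (g k * (w k)^*%C))) 0
  <= (if k == 0 then 0 else 2^-1 * (aa s1 k * cabs2 (w k))) + al * cabs2 (g k).
Proof.
move=> al0; rewrite /T0; case: eqP => [_|/eqP hk].
  by rewrite mul0r add0r mulr_ge0 // ?cab_ge0 // ltW.
have a0 := @aa_gt0 _ _ s1 k hk.
change (fsq R k `^ s1) with (aa s1 k).
case: (g k) => g1 g2; case: (w k) => w1 w2; rewrite /cabs2 /=.
by apply: (@wbr (aa s1 k) al g1 g2 w1 w2) => //; ring.
Qed.

Lemma wbH_NRe (s1 al : R) (g w : coef R d) (k : freq d) : 0 < al ->
  T0 s1 al k * Num.max (- complex.Re (if k == 0 then 0 else ((fsq R k `^ s1)%:C)%C * (g k * (w k)^*%C))) 0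
  <= (if k == 0 then 0 else 2^-1 * (aa s1 k * cabs2 (w k))) + al * cabs2 (g k).
Proof.
move=> al0; rewrite /T0; case: eqP => [_|/eqP hk].
  by rewrite mul0r add0r mulr_ge0 // ?cab_ge0 // ltW.
have a0 := @aa_gt0 _ _ s1 k hk.
change (fsq R k `^ s1) with (aa s1 k).
case: (g k) => g1 g2; case: (w k) => w1 w2; rewrite /cabs2 /=.
by apply: (@wbr (aa s1 k) al (- g1) (- g2) w1 w2) => //; ring.
Qed.

Lemma wbH_Im (s1 al : R) (g w : coef R d) (k : freq d) : 0 < al ->
  T0 s1 al k * Num.max (complex.Im (if k == 0 then 0 else ((fsq R k `^ s1)%:C)%C * (g k * (w k)^*%C))) 0
  <= (if k == 0 then 0 else 2^-1 * (aa s1 k * cabs2 (w k))) + al * cabs2 (g k).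
Proof.
move=> al0; rewrite /T0; case: eqP => [_|/eqP hk].
  by rewrite mul0r add0r mulr_ge0 // ?cab_ge0 // ltW.
have a0 := @aa_gt0 _ _ s1 k hk.
change (fsq R k `^ s1) with (aa s1 k).
case: (g k) => g1 g2; case: (w k) => w1 w2; rewrite /cabs2 /=.
by apply: (@wbr (aa s1 k) al g2 (- g1) w1 w2) => //; ring.
Qed.

Lemma wbH_NIm (s1 al : R) (g w : coef R d) (k : freq d) : 0 < al ->
  T0 s1 al k * Num.max (- complex.Im (if k == 0 then 0 else ((fsq R k `^ s1)%:C)%C * (g k * (w k)^*%C))) 0
  <= (if k == 0 then 0 else 2^-1 * (aa s1 k * cabs2 (w k))) + al * cabs2 (g k).
Proof.
move=> al0; rewrite /T0; case: eqP => [_|/eqP hk].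
  by rewrite mul0r add0r mulr_ge0 // ?cab_ge0 // ltW.
have a0 := @aa_gt0 _ _ s1 k hk.
change (fsq R k `^ s1) with (aa s1 k).
case: (g k) => g1 g2; case: (w k) => w1 w2; rewrite /cabs2 /=.
by apply: (@wbr (aa s1 k) al (- g2) g1 w1 w2) => //; ring.
Qed.

Lemma wbL_Re (s1 s2 al b : R) (g w : coef R d) (k : freq d) : 0 < al -> 0 < b ->
  Sb s1 s2 al b k * Num.max (complex.Re (g k * (w k)^*%C)) 0
  <= 2^-1 * (cabs2 (w k) + cabs2 (g k)).
Proof.
move=> al0 b0.
have h0 : 0 <= 2^-1 * (cabs2 (w k) + cabs2 (g k)) by rewrite mulr_ge0 // addr_ge0 // cab_ge0.
have S1 : Sb s1 s2 al b k <= 1.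
  rewrite /Sb; case: eqP => // /eqP hk.
  have h := @tb_bounds R (aa s1 k) (aa s2 k) al b (@aa_gt0 _ _ s1 k hk) (@aa_gt0 _ _ s2 k hk) al0 b0.
  by simpl in h; case: h.
apply: le_trans (ler_piMl (maxr0_ge0 _) S1) _.
case: (g k) => g1 g2; case: (w k) => w1 w2; rewrite /cabs2 /=.
by apply: (@wbr2 g1 g2 w1 w2); ring.
Qed.

Lemma wbL_NRe (s1 s2 al b : R) (g w : coef R d) (k : freq d) : 0 < al -> 0 < b ->
  Sb s1 s2 al b k * Num.max (- complex.Re (g k * (w k)^*%C)) 0
  <= 2^-1 * (cabs2 (w k) + cabs2 (g k)).
Proof.
move=> al0 b0.
have h0 : 0 <= 2^-1 * (cabs2 (w k) + cabs2 (g k)) by rewrite mulr_ge0 // addr_ge0 // cab_ge0.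
have S1 : Sb s1 s2 al b k <= 1.
  rewrite /Sb; case: eqP => // /eqP hk.
  have h := @tb_bounds R (aa s1 k) (aa s2 k) al b (@aa_gt0 _ _ s1 k hk) (@aa_gt0 _ _ s2 k hk) al0 b0.
  by simpl in h; case: h.
apply: le_trans (ler_piMl (maxr0_ge0 _) S1) _.
case: (g k) => g1 g2; case: (w k) => w1 w2; rewrite /cabs2 /=.
by apply: (@wbr2 (- g1) (- g2) w1 w2); ring.
Qed.

Lemma wbL_Im (s1 s2 al b : R) (g w : coef R d) (k : freq d) : 0 < al -> 0 < b ->
  Sb s1 s2 al b k * Num.max (complex.Im (g k * (w k)^*%C)) 0
  <= 2^-1 * (cabs2 (w k) + cabs2 (g k)).
Proof.
move=> al0 b0.
have h0 : 0 <= 2^-1 * (cabs2 (w k) + cabs2 (g k)) by rewrite mulr_ge0 // addr_ge0 // cab_ge0.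
have S1 : Sb s1 s2 al b k <= 1.
  rewrite /Sb; case: eqP => // /eqP hk.
  have h := @tb_bounds R (aa s1 k) (aa s2 k) al b (@aa_gt0 _ _ s1 k hk) (@aa_gt0 _ _ s2 k hk) al0 b0.
  by simpl in h; case: h.
apply: le_trans (ler_piMl (maxr0_ge0 _) S1) _.
case: (g k) => g1 g2; case: (w k) => w1 w2; rewrite /cabs2 /=.
by apply: (@wbr2 g2 (- g1) w1 w2); ring.
Qed.

Lemma wbL_NIm (s1 s2 al b : R) (g w : coef R d) (k : freq d) : 0 < al -> 0 < b ->
  Sb s1 s2 al b k * Num.max (- complex.Im (g k * (w k)^*%C)) 0
  <= 2^-1 * (cabs2 (w k) + cabs2 (g k)).
Proof.
move=> al0 b0.
have h0 : 0 <= 2^-1 * (cabs2 (w k) + cabs2 (g k)) by rewrite mulr_ge0 // addr_ge0 // cab_ge0.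
have S1 : Sb s1 s2 al b k <= 1.
  rewrite /Sb; case: eqP => // /eqP hk.
  have h := @tb_bounds R (aa s1 k) (aa s2 k) al b (@aa_gt0 _ _ s1 k hk) (@aa_gt0 _ _ s2 k hk) al0 b0.
  by simpl in h; case: h.
apply: le_trans (ler_piMl (maxr0_ge0 _) S1) _.
case: (g k) => g1 g2; case: (w k) => w1 w2; rewrite /cabs2 /=.
by apply: (@wbr2 (- g2) g1 w1 w2); ring.
Qed.

End X.



Section Y.
Variable R : realType.
Variable d : nat.

Lemma BH_fin (s1 al : R) (g w : coef R d) : 0 < al -> H0 s1 w -> in_L2 g ->
  (\esum_(k in [set: freq d])
     ((if k == 0 then 0 else 2^-1 * (aa s1 k * cabs2 (w k))) + al * cabs2 (g k))%:E < +oo)%E.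
Proof.
move=> al0 [_ _ hw] hg.
rewrite (eq_esum (fun k _ => EFinD _ _)) esumD; last 2 first.
- by move=> k _; rewrite lee_fin; case: eqP => // _; rewrite !mulr_ge0 ?cab_ge0 ?aa_ge0.
- by move=> k _; rewrite lee_fin mulr_ge0 ?cab_ge0 // ltW.
apply: lte_add_pinfty; last first.
  by apply: finZ; [exact: L2fin hg | move=> k; exact: cab_ge0 | exact: ltW].
have -> : (\esum_(k in [set: freq d]) (if k == 0 then 0 else 2^-1 * (aa s1 k * cabs2 (w k)))%:E =
   \esum_(k in [set: freq d]) (2^-1 * (if k == 0 then 0 else aa s1 k * cabs2 (w k)))%:E)%E.
  by apply: eq_esum => k _; case: eqP => _; rewrite ?mulr0.
apply: finZ => //; last by move=> k; case: eqP => // _; rewrite mulr_ge0 ?aa_ge0 ?cab_ge0.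
move: hw; rewrite /sobsq esum_mkcond.
have -> : (\esum_(i in [set: freq d]) (if i \in [set k : freq d | k != 0%R]
      then ((fsq R i `^ s1 * cabs2 (w i))%:E) else 0%E) =
   \esum_(k in [set: freq d]) (if k == 0 then 0 else aa s1 k * cabs2 (w k))%:E)%E.
  by apply: eq_esum => k _; rewrite memNz; case: eqP.
by [].
Qed.

Lemma BL_fin (g w : coef R d) : in_L2 w -> in_L2 g ->
  (\esum_(k in [set: freq d]) (2^-1 * (cabs2 (w k) + cabs2 (g k)))%:E < +oo)%E.
Proof.
move=> hw hg; apply: finZ => //; last by move=> k; rewrite addr_ge0 ?cab_ge0.
rewrite (eq_esum (fun k _ => EFinD _ _)) esumD; last 2 first.
- by move=> k _; rewrite lee_fin cab_ge0.
- by move=> k _; rewrite lee_fin cab_ge0.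
by apply: lte_add_pinfty; exact: L2fin.
Qed.


Lemma T0_0 (s1 al : R) : T0 s1 al (0 : freq d) = 0.
Proof. by rewrite /T0 eqxx. Qed.

Lemma Hu0 (s1 al : R) (g : coef R d) : 0 < al -> in_L2 g -> H0 s1 (scl (T0 s1 al) g).
Proof.
move=> al0 gL; have Gf := L2fin gL.
have tk (k : freq d) : k != 0 -> [/\ 0 <= T0 s1 al k, T0 s1 al k <= 1 & aa s1 k * T0 s1 al k ^+ 2 <= al].
  by move=> hk; rewrite /T0 (negbTE hk); exact: (@t0_bounds R (aa s1 k) al (@aa_gt0 _ _ s1 k hk) al0).
split.
- apply: (le_lt_trans (@sq_le _ _ _ g _)) gL => k.
  rewrite /scl cab_scale; case: (k =P 0) => [->|/eqP hk].
    by rewrite T0_0 expr0n /= mul0r cab_ge0.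
  by have [? ? _] := tk k hk; apply: sqscale_le => //; [apply/andP | exact: cab_ge0].
- exact: (@scl0 _ _ _ g (T0_0 s1 al)).
- apply: (@esum_fin_le R (freq d) _ _ (fun k => al * cabs2 (g k))).
    move=> k /= hk; rewrite /scl cab_scale mulrA.
    have [? ? h] := tk k hk.
    rewrite mulr_ge0 ?mulr_ge0 ?powR_ge0 ?sqr_ge0 ?cab_ge0 //=.
    by rewrite ler_wpM2r ?cab_ge0.
  apply: (le_lt_trans (@esum_sub_le R (freq d) _ (fun k => al * cabs2 (g k)) _)).
    by move=> k; rewrite mulr_ge0 ?cab_ge0 // ltW.
  by apply: finZ => //; [move=> k; exact: cab_ge0 | rewrite ltW].
Qed.

Lemma Emin (s1 al : R) (g : coef R d) : 0 <= s1 -> 0 < al -> in_L2 g ->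
  minimizes_E s1 al g (scl (T0 s1 al) g).
Proof.
move=> s1p al0 gL; split; first exact: Hu0.
move=> u' [_ hu' _].
have EE (u : coef R d) : Efun s1 al g u = ((torus_c R d)%:E * \esum_(k in [set: freq d])
    (2^-1 * cabs2 (fraclap (s1 / 2) u k) + al / 2 * cabs2 (u k - g k))%:E)%E.
  rewrite /Efun /sqnormL2.
  apply: (@comb2 R (freq d) (fun k => cabs2 (fraclap (s1 / 2) u k)) (fun k => cabs2 (u k - g k))).
  - by move=> k; exact: cab_ge0.
  - by move=> k; exact: cab_ge0.
  - by rewrite invr_ge0.
  - by rewrite divr_ge0 // ltW.
  - by rewrite ltW // torus_c_gt0.
rewrite !EE; apply: lee_wpmul2l; first by rewrite lee_fin ltW // torus_c_gt0.
apply: le_esum => k _; rewrite lee_fin.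
case: (k =P 0) => [->|/eqP hk].
  by rewrite /fraclap hu' (@scl0 _ _ _ g (T0_0 s1 al)).
rewrite !cabs2_fraclap //.
change (fsq R k `^ s1) with (aa s1 k).
have h := @FcE_id R (aa s1 k) al (g k) (u' k) (@aa_gt0 _ _ s1 k hk) al0.
simpl in h; rewrite h /scl /T0 (negbTE hk) lerDl mulr_ge0 ?cab_ge0 //.
by rewrite divr_ge0 // addr_ge0 // ltW // aa_gt0.
Qed.

End Y.



Section Z.
Variable R : realType.
Variable d : nat.

Lemma weakU (s1 s2 al : R) (g w : coef R d) (beta : nat -> R) :
  0 < al -> in_L2 g -> (forall n, 0 < beta n) -> (forall n, beta n < beta n.+1) ->
  beta @ \oo --> +oo -> H0 s1 w ->
  ccvg (fun n => innerH s1 (scl (Tb s1 s2 al (beta n)) g) w) (innerH s1 (scl (T0 s1 al) g) w).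
Proof.
move=> al0 gL b0 binc bcv Hw.
have Bf := BH_fin al0 Hw gL.
have B0 k : 0 <= (if k == 0 then 0 else 2^-1 * (aa s1 k * cabs2 (w k))) + al * cabs2 (g k).
  apply: addr_ge0; last by rewrite mulr_ge0 ?cab_ge0 // ltW.
  by case: eqP => // _; rewrite !mulr_ge0 ?aa_ge0 ?cab_ge0.
split.
- under eq_fun do rewrite ReH.
  rewrite ReH.
  apply: (@rsum_cvg_inc _ _ (fun n k => Tb s1 s2 al (beta n) k) (T0 s1 al)).
  + by move=> n k; exact: Tb_ge0.
  + by move=> n k; apply: Tb_inc => //; exact: ltW.
  + by move=> k; exact: Tb_lim.
  + apply: (@esum_fin_le R (freq d) _ _ _ _ Bf) => k _.
    by rewrite mulr_ge0 ?T0_ge0 ?maxr0_ge0 // wbH_Re.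
  + apply: (@esum_fin_le R (freq d) _ _ _ _ Bf) => k _.
    by rewrite mulr_ge0 ?T0_ge0 ?maxr0_ge0 // wbH_NRe.
- under eq_fun do rewrite ImH.
  rewrite ImH.
  apply: (@rsum_cvg_inc _ _ (fun n k => Tb s1 s2 al (beta n) k) (T0 s1 al)).
  + by move=> n k; exact: Tb_ge0.
  + by move=> n k; apply: Tb_inc => //; exact: ltW.
  + by move=> k; exact: Tb_lim.
  + apply: (@esum_fin_le R (freq d) _ _ _ _ Bf) => k _.
    by rewrite mulr_ge0 ?T0_ge0 ?maxr0_ge0 // wbH_Im.
  + apply: (@esum_fin_le R (freq d) _ _ _ _ Bf) => k _.
    by rewrite mulr_ge0 ?T0_ge0 ?maxr0_ge0 // wbH_NIm.
Qed.


Lemma weakV (s1 s2 al : R) (g w : coef R d) (beta : nat -> R) :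
  0 < al -> in_L2 g -> (forall n, 0 < beta n) -> (forall n, beta n < beta n.+1) ->
  beta @ \oo --> +oo -> in_L2 w ->
  ccvg (fun n => innerL2 (scl (Sb s1 s2 al (beta n)) g) w) (innerL2 (fun _ => 0) w).
Proof.
move=> al0 gL b0 binc bcv hw.
have -> : (fun _ : freq d => 0 : R[i]) = scl (fun _ => 0) g.
  by apply: funext => k; rewrite /scl mul0r.
have Bf := BL_fin hw gL.
have B0 (k : freq d) : 0 <= 2^-1 * (cabs2 (w k) + cabs2 (g k)).
  by rewrite mulr_ge0 // addr_ge0 ?cab_ge0.
split.
- under eq_fun do rewrite ReL2.
  rewrite ReL2; apply: cvgMl_tmp.
  apply: (@rsum_cvg_dec _ _ (fun n k => Sb s1 s2 al (beta n) k) (fun _ => 0)).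
  + by move=> n k; exact: Sb_ge0.
  + by move=> n k; apply: Sb_dec => //; exact: ltW.
  + by move=> k; exact: Sb_lim.
  + apply: (@esum_fin_le R (freq d) _ _ _ _ Bf) => k _.
    by rewrite mulr_ge0 ?Sb_ge0 ?maxr0_ge0 // wbL_Re.
  + apply: (@esum_fin_le R (freq d) _ _ _ _ Bf) => k _.
    by rewrite mulr_ge0 ?Sb_ge0 ?maxr0_ge0 // wbL_NRe.
- under eq_fun do rewrite ImL2.
  rewrite ImL2; apply: cvgMl_tmp.
  apply: (@rsum_cvg_dec _ _ (fun n k => Sb s1 s2 al (beta n) k) (fun _ => 0)).
  + by move=> n k; exact: Sb_ge0.
  + by move=> n k; apply: Sb_dec => //; exact: ltW.
  + by move=> k; exact: Sb_lim.
  + apply: (@esum_fin_le R (freq d) _ _ _ _ Bf) => k _.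
    by rewrite mulr_ge0 ?Sb_ge0 ?maxr0_ge0 // wbL_Im.
  + apply: (@esum_fin_le R (freq d) _ _ _ _ Bf) => k _.
    by rewrite mulr_ge0 ?Sb_ge0 ?maxr0_ge0 // wbL_NIm.
Qed.

End Z.



Section M.
Variable R : realType.
Variable d : nat.

Lemma bnds (s1 s2 al b : R) (g : coef R d) : s2 <= 0 -> 0 < al -> 0 < b -> in_L2 g ->
  [/\ (sqnormL2 (scl (Tb s1 s2 al b) g) <= sqnormL2 g)%E,
      (sobsq s1 (scl (Tb s1 s2 al b) g) <= al%:E * \esum_(k in [set: freq d]) (cabs2 (g k))%:E)%E,
      (sqnormL2 (scl (Sb s1 s2 al b) g) <= sqnormL2 g)%E &
      (sobsq s2 (scl (Sb s1 s2 al b) g) <= \esum_(k in [set: freq d]) (cabs2 (g k))%:E)%E].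
Proof.
move=> s2n al0 b0 gL.
have tk (k : freq d) : k != 0 -> [/\ 0 <= Tb s1 s2 al b k, Tb s1 s2 al b k <= 1,
    aa s1 k * Tb s1 s2 al b k ^+ 2 <= al, 0 <= Sb s1 s2 al b k & Sb s1 s2 al b k <= 1].
  move=> hk; rewrite /Tb /Sb (negbTE hk).
  have h := @tb_bounds R (aa s1 k) (aa s2 k) al b (@aa_gt0 _ _ s1 k hk) (@aa_gt0 _ _ s2 k hk) al0 b0.
  by simpl in h; rewrite /DD; exact: h.
have t0 : Tb s1 s2 al b (0 : freq d) = 0 by rewrite /Tb eqxx.
have s0 : Sb s1 s2 al b (0 : freq d) = 0 by rewrite /Sb eqxx.
split.
- apply: sq_le => k; rewrite /scl cab_scale; case: (k =P 0) => [->|/eqP hk].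
    by rewrite t0 expr0n /= mul0r cab_ge0.
  by have [? ? _ _ _] := tk k hk; apply: sqscale_le => //; [apply/andP | exact: cab_ge0].
- apply: le_trans; last first.
    rewrite -esumZ; last 2 first.
    + exact: ltW.
    + by move=> k _; exact: cab_ge0.
    apply: (@esum_sub_le R (freq d) [set k : freq d | k != 0%R] (fun k => al * cabs2 (g k))).
    by move=> k; rewrite mulr_ge0 ?cab_ge0 // ltW.
  apply: le_esum => k /= hk; rewrite lee_fin /scl cab_scale mulrA.
  have [? ? h _ _] := tk k hk.
  by rewrite ler_wpM2r ?cab_ge0.
- apply: sq_le => k; rewrite /scl cab_scale; case: (k =P 0) => [->|/eqP hk].
    by rewrite s0 expr0n /= mul0r cab_ge0.
  by have [_ _ _ ? ?] := tk k hk; apply: sqscale_le => //; [apply/andP | exact: cab_ge0].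
- apply: le_trans; last first.
    apply: (@esum_sub_le R (freq d) [set k : freq d | k != 0%R] (fun k => cabs2 (g k))).
    by move=> k; rewrite cab_ge0.
  apply: le_esum => k /= hk; rewrite lee_fin /scl cab_scale.
  have [_ _ _ h1 h2] := tk k hk.
  apply: (@le_trans _ _ (Sb s1 s2 al b k ^+ 2 * cabs2 (g k))).
    apply: ler_piMl; [by rewrite mulr_ge0 ?sqr_ge0 ?cab_ge0 | exact: pow_le1].
  apply: sqscale_le; [exact/andP | exact: cab_ge0].
Qed.

End M.

Unset Implicit Arguments. Set Strict Implicit.

Theorem lemma7 (R : realType) (d : nat) (s1 s2 alpha : R) (g : coef R d)
  (uB vB : R -> coef R d) (beta : nat -> R) :
  (1 <= d)%N -> 0 <= s1 -> s2 <= 0 -> 0 < alpha -> in_L2 g ->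
  (forall b : R, 0 < b -> minimizes_I s1 s2 alpha b g (uB b) (vB b)) ->
  (forall n, 0 < beta n) -> (forall n, beta n < beta n.+1) ->
  beta @ \oo --> +oo ->
  (exists M : R, forall n,
      [/\ (sqnormL2 (uB (beta n)) <= M%:E)%E, (sobsq s1 (uB (beta n)) <= M%:E)%E,
          (sqnormL2 (vB (beta n)) <= M%:E)%E & (sobsq s2 (vB (beta n)) <= M%:E)%E])
  /\
  exists phi : nat -> nat, (forall n, (phi n < phi n.+1)%N) /\
  exists u0 : coef R d,
    [/\ minimizes_E s1 alpha g u0,
        weak_H0 s1 (fun n => uB (beta (phi n))) u0 &
        weak_L20 (fun n => vB (beta (phi n))) (fun _ => 0)].
Proof.
move=> d1 s1p s2n al0 gL Hmin b0 binc bcv.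
have E n := ident s1p s2n al0 (b0 n) gL (Hmin _ (b0 n)).
have Gf := L2fin gL.
set G := (\esum_(k in [set: freq d]) (cabs2 (g k))%:E)%E in Gf *.
have G0 : (0 <= G)%E by apply: esum_ge0R => k; exact: cab_ge0.
have GE : G = (fine G)%:E by rewrite fineK // ge0_fin_numE.
have S0 : (0 <= sqnormL2 g)%E.
  by rewrite /sqnormL2 mule_ge0 // ?lee_fin ?ltW ?torus_c_gt0 // esum_ge0R // => k; exact: cab_ge0.
have SE : sqnormL2 g = (fine (sqnormL2 g))%:E by rewrite fineK // ge0_fin_numE.
have fG0 : 0 <= fine G by rewrite fine_ge0.
have fS0 : 0 <= fine (sqnormL2 g) by rewrite fine_ge0.
split.
  exists (fine (sqnormL2 g) + alpha * fine G + fine G) => n.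
  have [eu ev] := E n; rewrite eu ev.
  have [h1 h2 h3 h4] := bnds s1 s2n al0 (b0 n) gL.
  have aG0 : 0 <= alpha * fine G by rewrite mulr_ge0 // ltW.
  split.
  - apply: le_trans h1 _; rewrite SE lee_fin; lra.
  - apply: le_trans h2 _; rewrite -/G GE -EFinM lee_fin; lra.
  - apply: le_trans h3 _; rewrite SE lee_fin; lra.
  - apply: le_trans h4 _; rewrite -/G GE lee_fin; lra.
exists (fun n => n); split => //.
exists (scl (T0 s1 alpha) g); split.
- exact: Emin.
- move=> w Hw.
  have := weakU s2 al0 gL b0 binc bcv Hw.
  congr ccvg; apply: funext => n /=; by case: (E n) => -> _.
- move=> w hw _.
  have := weakV s1 s2 al0 gL b0 binc bcv hw.
  congr ccvg; apply: funext => n /=; by case: (E n) => _ ->.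
Qed.
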